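(* Let $H=\pi\sigma_z/\tau$ on a qubit, $|\Phi\rangle=(|0\rangle+|1\rangle)/\sqrt2$, and $\rho=\lambda|\Phi\rangle\langle\Phi|+(1-\lambda)I/2$ with $0<\lambda<1$. Then for any TI operation $\mathcal E$ from $n$ copies of the qubit (total Hamiltonian $\sum_{i=1}^nH^{(i)}$) to one qubit with Hamiltonian $H$, $$1-\langle\Phi|\mathcal E(\rho^{\otimes n})|\Phi\rangle\ \ge\ \frac1n\,\frac{1-\lambda^2}{4\lambda^2}+O\Big(\frac1{n^2}\Big)\quad(n\to\infty).$$
   Context: $H^{(i)}=I^{\otimes(i-1)}\otimes H\otimes I^{\otimes(n-i)}$. TI operation: CPTP map $\mathcal E$ with $e^{-iH_{\rm out}t}\mathcal E(\sigma)e^{iH_{\rm out}t}=\mathcal E(e^{-iH_{\rm in}t}\sigma e^{iH_{\rm in}t})$ for all states $\sigma$ and all $t\in\mathbb R$. *)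

(* Defs.v *)
From Stdlib Require Import Reals Lra Factorial.
Open Scope R_scope.

Definition C := (R * R)%type.
Definition Cre (z : C) : R := fst z.
Definition Cim (z : C) : R := snd z.
Definition RtoC (r : R) : C := (r, 0).
Definition C0 : C := (0, 0).
Definition C1 : C := (1, 0).
Definition Ci : C := (0, 1).
Definition Cadd (z w : C) : C := (fst z + fst w, snd z + snd w).
Definition Cmul (z w : C) : C :=
  (fst z * fst w - snd z * snd w, fst z * snd w + snd z * fst w).
Definition Cconj (z : C) : C := (fst z, - snd z).

Fixpoint Csum (f : nat -> C) (n : nat) : C :=
  match n with O => C0 | S m => Cadd (Csum f m) (f m) end.

(* ---------- matrices (entries outside the d x d range are irrelevant) ---------- *)
Definition Mat := nat -> nat -> C.
Definition MatEq (d : nat) (A B : Mat) : Prop :=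
  forall i j, (i < d)%nat -> (j < d)%nat -> A i j = B i j.
Definition Madd (A B : Mat) : Mat := fun i j => Cadd (A i j) (B i j).
Definition Mscale (c : C) (A : Mat) : Mat := fun i j => Cmul c (A i j).
Definition Msum (f : nat -> Mat) (k : nat) : Mat := fun i j => Csum (fun m => f m i j) k.
Definition Mmul (d : nat) (A B : Mat) : Mat :=
  fun i j => Csum (fun k => Cmul (A i k) (B k j)) d.
Definition Madj (A : Mat) : Mat := fun i j => Cconj (A j i).
Definition Mid : Mat := fun i j => if Nat.eqb i j then C1 else C0.
(* Kronecker product A (x) B, where b is the dimension of B *)
Definition kron (b : nat) (A B : Mat) : Mat :=
  fun i j => Cmul (A (i / b)%nat (j / b)%nat) (B (i mod b)%nat (j mod b)%nat).
Definition trace (d : nat) (A : Mat) : C := Csum (fun i => A i i) d.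
Definition qform (d : nat) (x : nat -> C) (A : Mat) : C :=
  Csum (fun i => Csum (fun j => Cmul (Cconj (x i)) (Cmul (A i j) (x j))) d) d.
(* positive semidefinite: <x|A|x> real and >= 0 for all x (implies Hermitian) *)
Definition PSD (d : nat) (A : Mat) : Prop :=
  forall x : nat -> C, Cim (qform d x A) = 0 /\ 0 <= Cre (qform d x A).
Definition density (d : nat) (A : Mat) : Prop := PSD d A /\ trace d A = C1.

Fixpoint Mpow (d : nat) (A : Mat) (k : nat) : Mat :=
  match k with O => Mid | S m => Mmul d (Mpow d A m) A end.
Definition expm_partial (d : nat) (A : Mat) (N : nat) : Mat :=
  Msum (fun k => Mscale (RtoC (/ INR (fact k))) (Mpow d A k)) (S N).
Definition IsExpm (d : nat) (A U : Mat) : Prop :=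
  forall i j, (i < d)%nat -> (j < d)%nat ->
    Un_cv (fun N => Cre (expm_partial d A N i j)) (Cre (U i j)) /\
    Un_cv (fun N => Cim (expm_partial d A N i j)) (Cim (U i j)).

Definition linear_map (din dout : nat) (E : Mat -> Mat) : Prop :=
  (forall A B, MatEq din A B -> MatEq dout (E A) (E B)) /\
  (forall (c : C) (A B : Mat),
      MatEq dout (E (Madd A (Mscale c B))) (Madd (E A) (Mscale c (E B)))).
(* id_k (x) E, ancilla as first tensor factor (block (a,b) of X is mapped by E) *)
Definition ampliate (din dout : nat) (E : Mat -> Mat) (X : Mat) : Mat :=
  fun I J => E (fun i j => X ((I / dout) * din + i)%nat ((J / dout) * din + j)%nat)
               (I mod dout)%nat (J mod dout)%nat.
Definition completely_positive (din dout : nat) (E : Mat -> Mat) : Prop :=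
  forall (k : nat) (X : Mat), PSD (k * din) X -> PSD (k * dout) (ampliate din dout E X).
Definition trace_preserving (din dout : nat) (E : Mat -> Mat) : Prop :=
  forall X, trace dout (E X) = trace din X.
Definition CPTP (din dout : nat) (E : Mat -> Mat) : Prop :=
  linear_map din dout E /\ completely_positive din dout E /\ trace_preserving din dout E.

Definition TI (din dout : nat) (Hin Hout : Mat) (E : Mat -> Mat) : Prop :=
  forall (sigma : Mat) (t : R) (Uin Uout : Mat),
    density din sigma ->
    IsExpm din (Mscale (Cmul (RtoC (- t)) Ci) Hin) Uin ->
    IsExpm dout (Mscale (Cmul (RtoC (- t)) Ci) Hout) Uout ->
    MatEq dout (Mmul dout (Mmul dout Uout (E sigma)) (Madj Uout))
               (E (Mmul din (Mmul din Uin sigma) (Madj Uin))).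

(* H = pi sigma_z / tau, basis |0>, |1> = indices 0, 1 *)
Definition Hq (tau : R) : Mat := fun i j =>
  match i, j with
  | O, O => RtoC (PI / tau)
  | 1%nat, 1%nat => RtoC (- (PI / tau))
  | _, _ => C0
  end.
(* H^{(i)} = I^{(x)(i-1)} (x) H (x) I^{(x)(n-i)} on n qubits, 1 <= i <= n *)
Definition Hlocal (n i : nat) (H : Mat) : Mat :=
  kron (2 ^ (n - i)) (kron 2 Mid H) Mid.
Definition Htot (n : nat) (H : Mat) : Mat := Msum (fun m => Hlocal n (S m) H) n.
Definition Phi : nat -> C := fun i => if Nat.ltb i 2 then RtoC (/ sqrt 2) else C0.
Definition PhiProj : Mat := fun i j => Cmul (Phi i) (Cconj (Phi j)).
Definition rho (lam : R) : Mat :=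
  Madd (Mscale (RtoC lam) PhiProj) (Mscale (RtoC ((1 - lam) / 2)) Mid).
Fixpoint tpow (A : Mat) (n : nat) : Mat :=
  match n with O => Mid | S m => kron 2 (tpow A m) A end.

(* Main.v *)
Require Import Defs.
From Stdlib Require Import Reals Lra Lia Factorial.
Open Scope R_scope.
Notation CC := Defs.C.

Lemma dm2 k r : (r < 2)%nat -> ((2*k+r)/2 = k)%nat.
Proof. intros; symmetry; apply Nat.div_unique with r; lia. Qed.
Lemma md2 k r : (r < 2)%nat -> ((2*k+r) mod 2 = r)%nat.
Proof. intros; symmetry; apply Nat.mod_unique with k; lia. Qed.
Lemma mod2_lt a : (a mod 2 < 2)%nat.
Proof. apply Nat.mod_upper_bound; lia. Qed.
Lemma div2_lt a b : (a < 2 * b)%nat -> (a/2 < b)%nat.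
Proof. intros. apply Nat.Div0.div_lt_upper_bound; lia. Qed.

Lemma Ceq (z w : CC) : fst z = fst w -> snd z = snd w -> z = w.
Proof. destruct z, w; simpl; intros; subst; auto. Qed.

Ltac cunf := unfold Defs.Cadd, Defs.Cmul, Defs.Cconj, Defs.RtoC, Defs.C0, Defs.C1, Defs.Ci, Defs.Cre, Defs.Cim in *.
Ltac cring := cunf; apply Ceq; cbn [fst snd]; ring.

Lemma Csum_ext f g n : (forall k, (k < n)%nat -> f k = g k) -> Csum f n = Csum g n.
Proof. induction n; simpl; intros; auto. rewrite IHn by (intros; apply H; lia). rewrite H by lia; auto. Qed.

Lemma Csum_zero f n : (forall k, (k < n)%nat -> f k = C0) -> Csum f n = C0.
Proof. induction n; simpl; intros; auto. rewrite IHn by (intros; apply H; lia). rewrite H by lia. cring. Qed.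

Lemma Csum_single f n i : (i < n)%nat -> (forall k, (k < n)%nat -> k <> i -> f k = C0) -> Csum f n = f i.
Proof.
  induction n; simpl; intros. lia.
  destruct (Nat.eq_dec i n).
  - subst. rewrite Csum_zero by (intros; apply H0; lia). cring.
  - rewrite IHn by (try lia; intros; apply H0; lia). rewrite (H0 n) by lia. cring.
Qed.

Lemma Csum_add f g n : Csum (fun k => Cadd (f k) (g k)) n = Cadd (Csum f n) (Csum g n).
Proof. induction n; simpl. cring. rewrite IHn. cring. Qed.

Lemma Csum_scal c f n : Csum (fun k => Cmul c (f k)) n = Cmul c (Csum f n).
Proof. induction n; simpl. cring. rewrite IHn. cring. Qed.

Lemma Csum_scar c f n : Csum (fun k => Cmul (f k) c) n = Cmul (Csum f n) c.
Proof. induction n; simpl. cring. rewrite IHn. cring. Qed.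

Lemma Csum_conj f n : Cconj (Csum f n) = Csum (fun k => Cconj (f k)) n.
Proof. induction n; simpl. cring. rewrite <- IHn. cring. Qed.

Lemma Csum_swap f n m : Csum (fun i => Csum (fun j => f i j) m) n = Csum (fun j => Csum (fun i => f i j) n) m.
Proof.
  induction n; simpl. rewrite Csum_zero; auto.
  rewrite IHn. rewrite <- Csum_add. auto.
Qed.

Lemma Csum_split2 f M : Csum f (2 * M) = Csum (fun k => Cadd (f (2*k)%nat) (f (2*k+1)%nat)) M.
Proof.
  induction M. simpl. auto.
  replace (2 * S M)%nat with (S (S (2*M))) by lia. cbn [Csum]. rewrite IHM.
  replace (2*M+1)%nat with (S (2*M)) by lia. cring.
Qed.

Lemma Cre_Csum f n : Cre (Csum f (S n)) = sum_f_R0 (fun k => Cre (f k)) n.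
Proof. induction n. cunf; simpl; ring. cbn [Csum] in *. unfold Cre in *. simpl. rewrite <- IHn. auto. Qed.
Lemma Cim_Csum f n : Cim (Csum f (S n)) = sum_f_R0 (fun k => Cim (f k)) n.
Proof. induction n. cunf; simpl; ring. cbn [Csum] in *. unfold Cim in *. simpl. rewrite <- IHn. auto. Qed.
Lemma dm2' k : ((2*k)/2 = k)%nat.
Proof. rewrite <- (Nat.add_0_r (2*k)). apply dm2; lia. Qed.
Lemma md2' k : ((2*k) mod 2 = 0)%nat.
Proof. rewrite <- (Nat.add_0_r (2*k)). apply md2; lia. Qed.

Lemma tpow_S A m i j : tpow A (S m) i j = Cmul (tpow A m (i/2)%nat (j/2)%nat) (A (i mod 2)%nat (j mod 2)%nat).
Proof. reflexivity. Qed.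

Lemma tpow_compat A B n : MatEq 2 A B -> MatEq (2^n) (tpow A n) (tpow B n).
Proof.
  intros H. induction n; intros i j Hi Hj. reflexivity.
  rewrite !tpow_S. simpl in Hi, Hj.
  rewrite IHn by (apply div2_lt; lia). rewrite H by apply mod2_lt. auto.
Qed.

Lemma Mmul_compat d A A' B B' : MatEq d A A' -> MatEq d B B' -> MatEq d (Mmul d A B) (Mmul d A' B').
Proof. intros HA HB i j Hi Hj. unfold Mmul. apply Csum_ext; intros. rewrite HA, HB by lia. auto. Qed.

Lemma Madj_compat d A B : MatEq d A B -> MatEq d (Madj A) (Madj B).
Proof. intros H i j Hi Hj. unfold Madj. rewrite H; auto. Qed.

Lemma tpow_mul A B n : MatEq (2^n) (Mmul (2^n) (tpow A n) (tpow B n)) (tpow (Mmul 2 A B) n).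
Proof.
  induction n; intros i j Hi Hj.
  - simpl in *. assert (i = 0%nat) by lia. assert (j = 0%nat) by lia. subst.
    unfold Mmul, Mid; simpl. cunf. apply Ceq. simpl. ring. simpl. ring.
  - rewrite tpow_S. rewrite <- IHn by (simpl in *; apply div2_lt; lia).
    unfold Mmul. change (2 ^ S n)%nat with (2 * 2^n)%nat. rewrite Csum_split2.
    rewrite <- Csum_scar. apply Csum_ext. intros k Hk.
    rewrite !tpow_S. rewrite ?dm2, ?md2, ?dm2', ?md2' by lia.
    cbn [Csum]. cring.
Qed.

Lemma tpow_adj A n i j : Madj (tpow A n) i j = tpow (Madj A) n i j.
Proof.
  revert i j; induction n; intros.
  - simpl. unfold Madj, Mid. rewrite Nat.eqb_sym. destruct (Nat.eqb i j); cring.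
  - unfold Madj in *. rewrite !tpow_S. rewrite <- IHn. cring.
Qed.

Fixpoint Cpow (z : CC) (n : nat) : CC := match n with O => Defs.C1 | S m => Cmul (Cpow z m) z end.

Lemma trace_tpow A n : trace (2^n) (tpow A n) = Cpow (trace 2 A) n.
Proof.
  induction n.
  - unfold trace; simpl; unfold Mid; simpl. cring.
  - simpl Cpow. rewrite <- IHn. unfold trace. change (2 ^ S n)%nat with (2 * 2^n)%nat.
    rewrite Csum_split2. rewrite <- Csum_scar. apply Csum_ext; intros k Hk.
    rewrite !tpow_S, ?dm2, ?md2, ?dm2', ?md2' by lia. cbn [Csum]. cring.
Qed.

Lemma trace_compat d A B : MatEq d A B -> trace d A = trace d B.
Proof. intros H. unfold trace. apply Csum_ext; intros; apply H; lia. Qed.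

Definition ZZt (d : nat) (Z : Mat) : Mat := fun I J => Csum (fun k => Cmul (Z I k) (Cconj (Z J k))) d.

Lemma Cmul_Csum f g n m : Cmul (Csum f n) (Csum g m) = Csum (fun i => Csum (fun j => Cmul (f i) (g j)) m) n.
Proof.
  rewrite <- Csum_scar. apply Csum_ext; intros. rewrite <- Csum_scal. auto.
Qed.

Lemma Csum_nonneg f n : (forall k, (k < n)%nat -> Cim (f k) = 0 /\ 0 <= Cre (f k)) ->
  Cim (Csum f n) = 0 /\ 0 <= Cre (Csum f n).
Proof.
  induction n; intros H. cunf; simpl; split; lra.
  cbn [Csum]. destruct IHn as [H1 H2]. intros; apply H; lia.
  destruct (H n) as [H3 H4]. lia. cunf; simpl in *. split; lra.
Qed.

Lemma ZZt_PSD d' d Z : PSD d' (ZZt d Z).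
Proof.
  intros x.
  set (w := fun k => Csum (fun I => Cmul (Cconj (x I)) (Z I k)) d').
  assert (qform d' x (ZZt d Z) = Csum (fun k => Cmul (w k) (Cconj (w k))) d).
  { unfold qform, ZZt, w.
    transitivity (Csum (fun I => Csum (fun J => Csum (fun k =>
        Cmul (Cmul (Cconj (x I)) (Z I k)) (Cmul (Cconj (Z J k)) (x J))) d) d') d').
    { apply Csum_ext; intros; apply Csum_ext; intros. rewrite <- Csum_scar, <- Csum_scal.
      apply Csum_ext; intros. cring. }
    symmetry. transitivity (Csum (fun k => Csum (fun I => Csum (fun J =>
        Cmul (Cmul (Cconj (x I)) (Z I k)) (Cmul (Cconj (Z J k)) (x J))) d') d') d).
    { apply Csum_ext; intros. rewrite Csum_conj. rewrite Cmul_Csum.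
      apply Csum_ext; intros; apply Csum_ext; intros. cring. }
    rewrite Csum_swap. apply Csum_ext; intros. rewrite Csum_swap. auto. }
  rewrite H. apply Csum_nonneg. intros k _. cunf; simpl. split. ring. nra.
Qed.

Lemma Mpow_diag d A (z : nat -> CC) :
  (forall i j, (i < d)%nat -> (j < d)%nat -> A i j = if Nat.eqb i j then z i else C0) ->
  forall k i j, (i < d)%nat -> (j < d)%nat -> Mpow d A k i j = if Nat.eqb i j then Cpow (z i) k else C0.
Proof.
  intros HA k; induction k; intros i j Hi Hj.
  - simpl. unfold Mid. auto.
  - simpl Mpow. unfold Mmul. rewrite (Csum_single _ d i) by (auto; intros l Hl Hli;
      rewrite IHk by auto; apply Nat.eqb_neq in Hli; rewrite Nat.eqb_sym, Hli; cring).
    rewrite IHk, HA by auto. rewrite Nat.eqb_refl. simpl Cpow.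
    destruct (Nat.eqb i j) eqn:E; [|cring]. apply Nat.eqb_eq in E; subst. auto.
Qed.

Definition expi (phi : R) : CC := (cos phi, sin phi).

Lemma Cpow_even phi j : Cpow (0, phi) (2*j) = ((-1)^j * phi^(2*j), 0).
Proof.
  induction j. simpl. cring.
  replace (2 * S j)%nat with (S (S (2*j))) by lia. cbn [Cpow]. rewrite IHj.
  replace (S (S (2*j))) with (2 * S j)%nat by lia.
  cunf. apply Ceq; cbn [fst snd]. rewrite !pow_mult. simpl. ring. ring.
Qed.

Lemma Cpow_odd phi j : Cpow (0, phi) (2*j+1) = (0, (-1)^j * phi^(2*j+1)).
Proof.
  replace (2*j+1)%nat with (S (2*j)) by lia. cbn [Cpow]. rewrite Cpow_even.
  cunf. apply Ceq; cbn [fst snd]. ring. simpl. ring.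
Qed.

Definition cosT phi i := cos_n i * (phi²)^i.
Definition sinT phi i := sin_n i * (phi²)^i.

Definition Pexp phi N := Csum (fun k => Cmul (RtoC (/ INR (fact k))) (Cpow (0, phi) k)) (S N).

Lemma Pexp_parts phi M :
  Cre (Pexp phi (2*M)) = sum_f_R0 (cosT phi) M /\ Cre (Pexp phi (2*M+1)) = sum_f_R0 (cosT phi) M /\
  Cim (Pexp phi (2*M+1)) = phi * sum_f_R0 (sinT phi) M /\
  Cim (Pexp phi (2*M+2)) = phi * sum_f_R0 (sinT phi) M.
Proof.
  assert (Hc : forall j, Cre (Cmul (RtoC (/ INR (fact (2*j)))) (Cpow (0, phi) (2*j))) = cosT phi j).
  { intros. rewrite Cpow_even. unfold cosT, cos_n. cunf; cbn [fst snd]. unfold Rsqr. rewrite pow_mult.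
    replace (phi^2) with (phi*phi) by ring. unfold Rdiv. ring. }
  assert (Hc' : forall j, Cim (Cmul (RtoC (/ INR (fact (2*j)))) (Cpow (0, phi) (2*j))) = 0).
  { intros. rewrite Cpow_even. cunf; simpl. ring. }
  assert (Hs : forall j, Cim (Cmul (RtoC (/ INR (fact (2*j+1)))) (Cpow (0, phi) (2*j+1))) = phi * sinT phi j).
  { intros. rewrite Cpow_odd. unfold sinT, sin_n. cunf; cbn [fst snd]. unfold Rsqr.
    rewrite pow_add, pow_mult. replace (phi^2) with (phi*phi) by ring. unfold Rdiv. ring. }
  assert (Hs' : forall j, Cre (Cmul (RtoC (/ INR (fact (2*j+1)))) (Cpow (0, phi) (2*j+1))) = 0).
  { intros. rewrite Cpow_odd. cunf; simpl. ring. }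
  unfold Pexp. induction M.
  - simpl. specialize (Hc 0%nat). specialize (Hs 0%nat). specialize (Hs' 0%nat). specialize (Hc' 0%nat).
    simpl in *. cunf. simpl in *. repeat split; lra.
  - destruct IHM as [A1 [A2 [A3 A4]]].
    replace (S (2 * S M)) with (S (S (S (2*M)))) by lia.
    replace (S (2 * S M + 1)) with (S (S (S (S (2*M))))) by lia.
    replace (S (2 * S M + 2)) with (S (S (S (S (S (2*M)))))) by lia.
    replace (S (2*M+1)) with (S (S (2*M))) in A2, A3 by lia.
    replace (S (2*M+2)) with (S (S (S (2*M)))) in A4 by lia.
    cbn [Csum] in *. simpl sum_f_R0.
    pose proof (Hc' (S (S M))) as Hc2.
    replace (2 * S (S M))%nat with (S (S (S (S (2*M))))) in Hc2 by lia.
    specialize (Hc (S M)). specialize (Hs (S M)). specialize (Hs' (S M)). specialize (Hc' (S M)).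
    replace (2 * S M)%nat with (S (S (2*M))) in Hc, Hc' by lia.
    replace (2 * S M + 1)%nat with (S (S (S (2*M)))) in Hs, Hs' by lia.
    unfold Cre, Cim in *. cbn [Cadd fst snd] in *. repeat split; lra.
Qed.

Lemma cos_inf phi : infinite_sum (cosT phi) (cos phi).
Proof. unfold cos. destruct (exist_cos (Rsqr phi)) as [a Ha]. exact Ha. Qed.
Lemma sin_inf phi : infinite_sum (sinT phi) (sin phi / phi) \/ phi = 0.
Abort.
Lemma sin_inf phi : exists a, infinite_sum (sinT phi) a /\ sin phi = phi * a.
Proof. unfold sin. destruct (exist_sin (Rsqr phi)) as [a Ha]. exists a. split; auto. Qed.

Lemma Pexp_cos phi : Un_cv (fun N => Cre (Pexp phi N)) (cos phi).
Proof.
  intros eps He. destruct (cos_inf phi eps He) as [N0 HN].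
  exists (2 * N0)%nat. intros N HN'.
  destruct (Nat.Even_or_Odd N) as [[M HM]|[M HM]]; subst N.
  - rewrite (proj1 (Pexp_parts phi M)). apply HN. lia.
  - rewrite (proj1 (proj2 (Pexp_parts phi M))). apply HN. lia.
Qed.

Lemma Pexp_sin phi : Un_cv (fun N => Cim (Pexp phi N)) (sin phi).
Proof.
  intros eps He. destruct (sin_inf phi) as [a [Ha Hs]].
  assert (He' : eps / (Rabs phi + 1) > 0).
  { apply Rdiv_lt_0_compat; auto. pose proof (Rabs_pos phi); lra. }
  destruct (Ha _ He') as [N0 HN].
  assert (key : forall M, (M >= N0)%nat -> Rdist (phi * sum_f_R0 (sinT phi) M) (sin phi) < eps).
  { intros M HM. specialize (HN M HM). rewrite Hs. unfold Rdist in *.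
    replace (phi * sum_f_R0 (sinT phi) M - phi * a) with (phi * (sum_f_R0 (sinT phi) M - a)) by ring.
    rewrite Rabs_mult. pose proof (Rabs_pos phi). pose proof (Rabs_pos (sum_f_R0 (sinT phi) M - a)).
    assert (Rabs (sum_f_R0 (sinT phi) M - a) * (Rabs phi + 1) < eps).
    { apply Rmult_lt_reg_r with (/ (Rabs phi + 1)). apply Rinv_0_lt_compat; lra.
      rewrite Rmult_assoc, Rinv_r by lra. unfold Rdiv in HN. lra. }
    nra. }
  exists (2 * N0 + 2)%nat. intros N HN'.
  destruct (Nat.Even_or_Odd N) as [[M HM]|[M HM]]; subst N.
  - destruct M. lia. replace (2 * S M)%nat with (2*M+2)%nat by lia.
    rewrite (proj2 (proj2 (proj2 (Pexp_parts phi M)))). apply key. lia.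
  - rewrite (proj1 (proj2 (proj2 (Pexp_parts phi M)))). apply key. lia.
Qed.

Lemma IsExpm_diag d A (phi : nat -> R) :
  (forall i j, (i < d)%nat -> (j < d)%nat -> A i j = if Nat.eqb i j then (0, phi i) else C0) ->
  IsExpm d A (fun i j => if Nat.eqb i j then expi (phi i) else C0).
Proof.
  intros HA i j Hi Hj.
  assert (HP : forall N, expm_partial d A N i j = if Nat.eqb i j then Pexp (phi i) N else C0).
  { intros N. unfold expm_partial, Msum, Mscale, Pexp.
    destruct (Nat.eqb i j) eqn:E.
    - apply Csum_ext; intros. rewrite (Mpow_diag d A (fun i => (0, phi i))) by auto. rewrite E. auto.
    - apply Csum_zero. intros. rewrite (Mpow_diag d A (fun i => (0, phi i))) by auto. rewrite E. cring. }
  destruct (Nat.eqb i j) eqn:E.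
  - split; intros eps He; [destruct (Pexp_cos (phi i) eps He) as [N0 HN] | destruct (Pexp_sin (phi i) eps He) as [N0 HN]];
      exists N0; intros N HN'; rewrite HP; apply HN; auto.
  - split; intros eps He; exists 0%nat; intros N _; rewrite HP; unfold Rdist; cunf; simpl;
      rewrite Rminus_diag, Rabs_R0; auto.
Qed.

Lemma Mid_split k a b :
  Mid (a mod (2 * 2^k))%nat (b mod (2 * 2^k))%nat = Cmul (Mid ((a/2) mod 2^k)%nat ((b/2) mod 2^k)%nat) (Mid (a mod 2)%nat (b mod 2)%nat).
Proof.
  rewrite !Nat.Div0.mod_mul_r.
  pose proof (mod2_lt a). pose proof (mod2_lt b).
  unfold Mid.
  destruct (Nat.eqb_spec (a mod 2 + 2 * ((a / 2) mod 2 ^ k)) (b mod 2 + 2 * ((b / 2) mod 2 ^ k)));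
  destruct (Nat.eqb_spec ((a / 2) mod 2 ^ k) ((b / 2) mod 2 ^ k));
  destruct (Nat.eqb_spec (a mod 2) (b mod 2)); try lia; cring.
Qed.

Lemma Hlocal_S m i H a b : (i < m)%nat ->
  Hlocal (S m) (S i) H a b = Cmul (Hlocal m (S i) H (a/2)%nat (b/2)%nat) (Mid (a mod 2)%nat (b mod 2)%nat).
Proof.
  intros Hi. unfold Hlocal, kron.
  replace (S m - S i)%nat with (S (m - S i)) by lia. change (2 ^ S (m - S i))%nat with (2 * 2 ^ (m - S i))%nat.
  rewrite Mid_split. rewrite <- !Nat.Div0.div_div. cring.
Qed.

Lemma Htot_S m H a b :
  Htot (S m) H a b = Cadd (Cmul (Htot m H (a/2)%nat (b/2)%nat) (Mid (a mod 2)%nat (b mod 2)%nat))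
                          (Cmul (Mid (a/2)%nat (b/2)%nat) (H (a mod 2)%nat (b mod 2)%nat)).
Proof.
  unfold Htot, Msum. cbn [Csum]. f_equal.
  - rewrite <- Csum_scar. apply Csum_ext. intros. apply Hlocal_S; auto.
  - unfold Hlocal, kron. rewrite Nat.sub_diag. simpl (2^0)%nat. rewrite !Nat.div_1_r, !Nat.mod_1_r.
    change (Mid 0%nat 0%nat) with Defs.C1. cring.
Qed.

Fixpoint Ediag (h : nat -> R) (n : nat) (a : nat) : R :=
  match n with O => 0 | S m => Ediag h m (a/2) + h (a mod 2)%nat end.

Lemma Htot_diag (H : Mat) (h : nat -> R) :
  (forall x y, (x < 2)%nat -> (y < 2)%nat -> H x y = if Nat.eqb x y then RtoC (h x) else C0) ->
  forall n a b, (a < 2^n)%nat -> (b < 2^n)%nat ->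
  Htot n H a b = if Nat.eqb a b then RtoC (Ediag h n a) else C0.
Proof.
  intros HH n. induction n; intros a b Ha Hb.
  - simpl in *. assert (a = 0%nat) by lia. assert (b = 0%nat) by lia. subst. simpl. unfold Htot, Msum. simpl. cring.
  - rewrite Htot_S. simpl in Ha, Hb.
    rewrite IHn by (apply div2_lt; lia). rewrite HH by apply mod2_lt.
    pose proof (Nat.div_mod_eq a 2). pose proof (Nat.div_mod_eq b 2).
    unfold Mid.
    destruct (Nat.eqb_spec a b); [subst; rewrite !Nat.eqb_refl; simpl; cring|].
    destruct (Nat.eqb_spec (a/2) (b/2)); destruct (Nat.eqb_spec (a mod 2) (b mod 2)); try lia; cring.
Qed.

Lemma expi_add x y : Cmul (expi x) (expi y) = expi (x + y).
Proof. unfold expi. rewrite cos_plus, sin_plus. cring. Qed.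

Lemma tpow_diag (u : Mat) (g : nat -> R) :
  (forall x y, (x < 2)%nat -> (y < 2)%nat -> u x y = if Nat.eqb x y then expi (g x) else C0) ->
  forall n a b, (a < 2^n)%nat -> (b < 2^n)%nat ->
  tpow u n a b = if Nat.eqb a b then expi (Ediag g n a) else C0.
Proof.
  intros HH n. induction n; intros a b Ha Hb.
  - simpl in *. assert (a = 0%nat) by lia. assert (b = 0%nat) by lia. subst. simpl.
    unfold Mid, expi. simpl. rewrite cos_0, sin_0. auto.
  - rewrite tpow_S. simpl in Ha, Hb.
    rewrite IHn by (apply div2_lt; lia). rewrite HH by apply mod2_lt.
    pose proof (Nat.div_mod_eq a 2). pose proof (Nat.div_mod_eq b 2).
    destruct (Nat.eqb_spec a b); [subst; rewrite !Nat.eqb_refl; simpl; apply expi_add|].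
    destruct (Nat.eqb_spec (a/2) (b/2)); destruct (Nat.eqb_spec (a mod 2) (b mod 2)); try lia; cring.
Qed.

Lemma Ediag_scale h c n a : Ediag (fun x => c * h x) n a = c * Ediag h n a.
Proof. revert a; induction n; intros; simpl. ring. rewrite IHn. ring. Qed.

Lemma IsExpm_compat d A U U' : MatEq d U U' -> IsExpm d A U -> IsExpm d A U'.
Proof. intros HU HE i j Hi Hj. rewrite <- HU by auto. apply HE; auto. Qed.

Definition mk2 (a b c d : CC) : Mat := fun i j =>
  match i, j with 0, 0 => a | 0, 1 => b | 1, 0 => c | 1, 1 => d | _, _ => C0 end%nat.

Lemma MatEq2 A B : A 0%nat 0%nat = B 0%nat 0%nat -> A 0%nat 1%nat = B 0%nat 1%nat ->
  A 1%nat 0%nat = B 1%nat 0%nat -> A 1%nat 1%nat = B 1%nat 1%nat -> MatEq 2 A B.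
Proof.
  intros. intros i j Hi Hj. destruct i as [|[|i]]; destruct j as [|[|j]]; auto; lia.
Qed.

Lemma Mmul2 A B i j : Mmul 2 A B i j = Cadd (Cmul (A i 0%nat) (B 0%nat j)) (Cmul (A i 1%nat) (B 1%nat j)).
Proof. unfold Mmul. cbn [Csum]. cring. Qed.

Lemma sqrt2_inv : / sqrt 2 * / sqrt 2 = 1/2.
Proof. rewrite <- Rinv_mult, sqrt_sqrt by lra. lra. Qed.

Lemma rho_eq lam : MatEq 2 (rho lam) (mk2 (1/2, 0) (lam/2, 0) (lam/2, 0) (1/2, 0)).
Proof.
  pose proof sqrt2_inv.
  apply MatEq2; unfold rho, Madd, Mscale, PhiProj, Phi, Mid; simpl; cunf; apply Ceq; cbn [fst snd].
  all: rewrite ?H; try field; apply Rgt_not_eq, sqrt_lt_R0; lra.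
Qed.

Definition hh (tau : R) (x : nat) : R := if Nat.eqb x 0 then PI / tau else - (PI / tau).

Lemma Hq_diag tau x y : (x < 2)%nat -> (y < 2)%nat -> Hq tau x y = if Nat.eqb x y then RtoC (hh tau x) else C0.
Proof. intros. destruct x as [|[|x]]; destruct y as [|[|y]]; try lia; reflexivity. Qed.

Definition uu (tau t : R) : Mat := fun x y => if Nat.eqb x y then expi (- t * hh tau x) else C0.

Lemma U_out tau t : IsExpm 2 (Mscale (Cmul (RtoC (-t)) Ci) (Hq tau)) (uu tau t).
Proof.
  apply (IsExpm_diag 2 _ (fun x => - t * hh tau x)).
  intros i j Hi Hj. unfold Mscale. rewrite Hq_diag by auto.
  destruct (Nat.eqb i j); cring.
Qed.

Lemma U_in tau t n : IsExpm (2^n) (Mscale (Cmul (RtoC (-t)) Ci) (Htot n (Hq tau))) (tpow (uu tau t) n).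
Proof.
  apply IsExpm_compat with (U := fun a b => if Nat.eqb a b then expi (- t * Ediag (hh tau) n a) else C0).
  - intros a b Ha Hb. rewrite (tpow_diag (uu tau t) (fun x => - t * hh tau x)); auto.
    rewrite Ediag_scale. auto.
  - apply (IsExpm_diag _ _ (fun a => - t * Ediag (hh tau) n a)).
    intros i j Hi Hj. unfold Mscale. rewrite (Htot_diag _ (hh tau)) by (auto; apply Hq_diag).
    destruct (Nat.eqb i j); cring.
Qed.

Lemma pow_diff_bound z n : 0 <= z -> (1+z)^(S n) - 1 <= INR (S n) * z * (1+z)^n.
Proof.
  intros Hz. induction n.
  - simpl. lra.
  - assert (H1 : 1 <= (1+z)^(S n)) by (apply pow_R1_Rle; lra).
    set (B := (1+z)^(S n)) in *.
    assert (HB : B = (1+z)^n * (1+z)) by (unfold B; simpl; ring).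
    replace ((1+z)^(S (S n))) with ((1+z) * B) by (unfold B; simpl; ring).
    rewrite (S_INR (S n)).
    assert (Hi : (1+z) * (B - 1) <= (1+z) * (INR (S n) * z * (1+z)^n)) by (apply Rmult_le_compat_l; lra).
    assert (z <= z * B) by nra.
    rewrite HB in Hi |- *. nra.
Qed.

Lemma pow_inv_bound z m : 0 <= z -> (1+z)^m * (1 - INR m * z) <= 1.
Proof.
  intros Hz. induction m.
  - simpl. lra.
  - rewrite S_INR. simpl. assert (0 <= (1+z)^m) by (apply pow_le; lra).
    assert ((1 + z) * (1 - (INR m + 1) * z) <= 1 - INR m * z) by (pose proof (pos_INR m); nra).
    nra.
Qed.

Lemma lim_arg x k n : 0 <= x -> x <= 1/4 -> 0 < k -> (1 <= n)%nat ->
  (forall eps, eps > 0 -> exists y, 0 < y < eps /\ 4 * x * y <= (1/4 - x) * ((1 + k*y)^n - 1)) ->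
  4 * x <= (1/4 - x) * (INR n * k).
Proof.
  intros Hx Hx' Hk Hn H.
  destruct n as [|m]. lia.
  set (L := (1/4 - x) * (INR (S m) * k)).
  destruct (Rle_or_lt (4*x) L) as [|Hc]; auto. exfalso.
  set (b := 4 * x * (INR m * k)).
  assert (Hb : 0 <= b) by (unfold b; pose proof (pos_INR m); apply Rmult_le_pos; nra).
  set (a := 4 * x - L).
  set (eps := Rmin (a / (b + 1)) (1 / (INR m * k + 1))).
  assert (Ha1 : 0 < a / (b+1)) by (apply Rdiv_lt_0_compat; unfold a; lra).
  assert (Ha2 : 0 < 1 / (INR m * k + 1)) by (apply Rdiv_lt_0_compat; pose proof (pos_INR m); nra).
  assert (He : eps > 0) by (unfold eps; apply Rmin_Rgt_r; lra).
  destruct (H eps He) as [y [[Hy1 Hy2] Hy]].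
  assert (Hy3 : y < a / (b+1)) by (eapply Rlt_le_trans; [exact Hy2| apply Rmin_l]).
  assert (Hy4 : y < 1 / (INR m * k + 1)) by (eapply Rlt_le_trans; [exact Hy2| apply Rmin_r]).
  assert (Hky : 0 <= k * y) by nra.
  pose proof (pow_diff_bound (k*y) m Hky) as P1.
  pose proof (pow_inv_bound (k*y) m Hky) as P2.
  set (Q := (1 + k*y)^m) in *.
  assert (HQ : 0 <= Q) by (apply pow_le; lra).
  assert (Hmk : INR m * k * y < 1).
  { pose proof (pos_INR m). apply (Rmult_lt_compat_l (INR m * k + 1)) in Hy4; [|nra].
    unfold Rdiv in Hy4. rewrite Rmult_1_l, Rinv_r in Hy4 by nra. nra. }
  assert (Hab : a <= b * y).
  {
    assert (4 * x * y <= (1/4 - x) * (INR (S m) * (k*y) * Q)) by nra.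
    assert (4 * x <= (1/4 - x) * INR (S m) * k * Q) .
    { apply Rmult_le_reg_r with y; auto. nra. }
    assert (4 * x * (1 - INR m * (k*y)) <= (1/4 - x) * INR (S m) * k * Q * (1 - INR m * (k*y))).
    { apply Rmult_le_compat_r; nra. }
    assert ((1/4 - x) * INR (S m) * k * Q * (1 - INR m * (k*y)) <= (1/4-x) * INR (S m) * k).
    { assert (0 <= (1/4 - x) * INR (S m) * k) by (pose proof (pos_INR (S m)); apply Rmult_le_pos; nra).
      nra. }
    unfold a, b, L. nra. }
  assert (b * y <= b * (a / (b+1))) by nra.
  assert (b * (a/(b+1)) < a).
  { unfold Rdiv. apply Rmult_lt_reg_r with (b+1). lra.
    rewrite !Rmult_assoc, Rinv_l by lra. unfold a in *. nra. }
  lra.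
Qed.

Lemma final_arith (lam x rc : R) (n : nat) : 0 < lam < 1 -> (1 <= n)%nat ->
  0 <= x -> rc * rc <= x ->
  4 * x <= (1/4 - x) * (INR n * (4 * lam^2 / (1 - lam^2))) ->
  1/2 - rc >= / INR n * ((1 - lam ^ 2) / (4 * lam ^ 2)) - ((1 - lam^2)/lam^2)^2/4 / (INR n ^ 2).
Proof.
  intros Hl Hn Hx Hr H.
  assert (Hn' : 1 <= INR n) by (apply (le_INR 1); auto).
  set (mu := (1 - lam^2)/lam^2).
  assert (Hmu : 0 < mu) by (unfold mu; apply Rdiv_lt_0_compat; nra).
  set (r := mu / INR n).
  assert (Hr0 : 0 < r) by (unfold r; apply Rdiv_lt_0_compat; lra).
  assert (Hx2 : 4 * x * (1 + r) <= 1).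
  { unfold r, mu. assert (0 < 1 - lam^2) by nra.
    assert (4 * x * (1 - lam^2) <= (1/4 - x) * (INR n * (4 * lam^2))).
    { apply Rmult_le_reg_r with (/ (1 - lam^2)). apply Rinv_0_lt_compat; lra.
      rewrite Rmult_assoc, Rinv_r by lra. unfold Rdiv in H. rewrite Rmult_1_r.
      replace ((1 / 4 - x) * (INR n * (4 * lam ^ 2)) * / (1 - lam ^ 2)) with
        ((1 / 4 - x) * (INR n * (4 * lam ^ 2 * / (1 - lam ^ 2)))) by ring. exact H. }
    assert (Hl2 : 0 < lam^2) by nra.
    unfold Rdiv. apply Rmult_le_reg_r with (INR n * lam^2). nra.
    replace (4 * x * (1 + (1 - lam ^ 2) * / lam ^ 2 * / INR n) * (INR n * lam ^ 2))
      with (4 * x * (INR n * lam^2) + 4 * x * (1 - lam^2) * ((lam^2 * / lam^2) * (INR n * / INR n))) by ring.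
    rewrite !Rinv_r by lra. nra. }
  set (B := 1/2 - r/4 + r^2/4).
  assert (HB : 0 < B) by (unfold B; nra).
  assert (HB2 : 1 <= (1 + r) * (4 * B * B)).
  { unfold B. assert (0 <= r^2 * (1 + 3*r - r^2 + r^3)) by (assert (0 < 1 + 3*r - r^2 + r^3) by nra; nra). nra. }
  assert (rc <= B).
  { destruct (Rle_or_lt rc B); auto. assert (B * B < rc * rc) by nra. nra. }
  assert (Hgoal : / INR n * ((1 - lam ^ 2) / (4 * lam ^ 2)) - mu ^ 2 / 4 / INR n ^ 2 = r/4 - r^2/4).
  { unfold r, mu. field. split; nra. }
  rewrite Hgoal. unfold B in *. lra.
Qed.

Definition v4 (x0 x1 x2 x3 : CC) : nat -> CC := fun i =>
  match i with 0 => x0 | 1 => x1 | 2 => x2 | 3 => x3 | _ => C0 end%nat.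

Lemma qform4 (O : Mat) x0 x1 x2 x3 : qform 4 (v4 x0 x1 x2 x3) O =
  Csum (fun i => Csum (fun j => Cmul (Cconj (v4 x0 x1 x2 x3 i)) (Cmul (O i j) (v4 x0 x1 x2 x3 j))) 4) 4.
Proof. reflexivity. Qed.

Lemma out_lemma (O : Mat) (zr zi T : R) :
  PSD 4 O ->
  Cre (O 0 0)%nat + Cre (O 1 1)%nat = 1 ->
  zr*zr + zi*zi = 1 ->
  O 0%nat 2%nat = C0 -> O 2%nat 0%nat = C0 -> O 1%nat 3%nat = C0 -> O 3%nat 1%nat = C0 ->
  O 0%nat 3%nat = Cmul (zr - 1, zi) (O 0 1)%nat -> O 2%nat 1%nat = Cmul (zr - 1, zi) (O 0 1)%nat ->
  O 1%nat 2%nat = Cmul (zr - 1, - zi) (O 1 0)%nat -> O 3%nat 0%nat = Cmul (zr - 1, - zi) (O 1 0)%nat ->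
  Cre (O 2 2)%nat + Cre (O 3 3)%nat = T ->
  Cre (O 0 1)%nat = Cre (O 1 0)%nat /\
  Cre (O 0 1)%nat ^ 2 + Cim (O 0 1)%nat ^ 2 <= 1/4 /\
  (Cre (O 0 1)%nat ^ 2 + Cim (O 0 1)%nat ^ 2) * (2 - 2 * zr) <= (1/4 - (Cre (O 0 1)%nat ^ 2 + Cim (O 0 1)%nat ^ 2)) * T.
Proof.
  intros HP Htr Hz E02 E20 E13 E31 E03 E21 E12 E30 HT.
  assert (Q : forall x0 x1 x2 x3, Cim (qform 4 (v4 x0 x1 x2 x3) O) = 0 /\ 0 <= Cre (qform 4 (v4 x0 x1 x2 x3) O))
    by (intros; apply HP).
  pose proof (Q (1,0) C0 C0 C0) as [A1 A2].
  pose proof (Q C0 (1,0) C0 C0) as [B1 B2].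
  pose proof (Q C0 C0 (1,0) C0) as [_ B3].
  pose proof (Q C0 C0 C0 (1,0)) as [_ B4].
  pose proof (Q (1,0) (1,0) C0 C0) as [C1' _].
  pose proof (Q (1,0) (0,1) C0 C0) as [D1 _].
  rewrite qform4 in *. cbn [Csum v4] in *.
  rewrite E02, E20, E13, E31 in *. unfold Cre in *. cunf. cbn [fst snd] in *.
  set (a := fst (O 0 0)%nat) in *. set (b := fst (O 1 1)%nat) in *.
  set (p := fst (O 0 1)%nat) in *. set (q := snd (O 0 1)%nat) in *.
  assert (H00 : O 0%nat 0%nat = (a, 0)) by (apply Ceq; simpl; [auto|nra]).
  assert (H11 : O 1%nat 1%nat = (b, 0)) by (apply Ceq; simpl; [auto|nra]).
  assert (H01 : O 0%nat 1%nat = (p, q)) by (apply Ceq; simpl; auto).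
  assert (H10 : O 1%nat 0%nat = (p, -q)) by (apply Ceq; simpl; nra).
  assert (Ha : 0 <= a) by nra. assert (Hb : 0 <= b) by nra.
  assert (HY0 : 0 <= fst (O 2 2)%nat) by nra. assert (HY1 : 0 <= fst (O 3 3)%nat) by nra.
  clear A1 A2 B1 B2 B3 B4 C1' D1.
  try rewrite H10 in E12, E30; try rewrite H01 in E03, E21.
  set (xr := (zr - 1) * p - zi * q). set (xi := (zr - 1) * q + zi * p).
  assert (F03 : O 0%nat 3%nat = (xr, xi)) by (rewrite E03; apply Ceq; simpl; unfold xr, xi; ring).
  assert (F21 : O 2%nat 1%nat = (xr, xi)) by (rewrite E21; apply Ceq; simpl; unfold xr, xi; ring).
  assert (F12 : O 1%nat 2%nat = (xr, -xi)) by (rewrite E12; apply Ceq; simpl; unfold xr, xi; ring).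
  assert (F30 : O 3%nat 0%nat = (xr, -xi)) by (rewrite E30; apply Ceq; simpl; unfold xr, xi; ring).
  set (N := xr^2 + xi^2). set (D := a * b - (p^2 + q^2)).
  assert (HN : N = (p^2 + q^2) * (2 - 2 * zr)) by (unfold N, xr, xi; nra).
  assert (HaD : 0 <= a * D).
  { pose proof (Q (p, q) (-a, 0) C0 C0) as [_ G]. rewrite qform4 in G. cbn [Csum v4] in G.
    rewrite E02, E20, E13, E31, H00, H11, H01, H10 in G. cunf. cbn [fst snd] in G. unfold D. nra. }
  assert (HbD : 0 <= b * D).
  { pose proof (Q (-b, 0) (p, -q) C0 C0) as [_ G]. rewrite qform4 in G. cbn [Csum v4] in G.
    rewrite E02, E20, E13, E31, H00, H11, H01, H10 in G. cunf. cbn [fst snd] in G. unfold D. nra. }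
  assert (HD : 0 <= D) by nra.
  assert (Hquad : forall s, 0 <= s * s * N * D - 2 * s * N + T).
  { intros s.
    pose proof (Q (s * (p * xr + q * xi), s * (q * xr - p * xi)) (- s * a * xr, s * a * xi) (1, 0) C0) as [_ G1].
    pose proof (Q (- s * b * xr, - s * b * xi) (s * (p * xr + q * xi), s * (p * xi - q * xr)) C0 (1, 0)) as [_ G2].
    rewrite qform4 in G1, G2. cbn [Csum v4] in G1, G2.
    rewrite E02, E20, E13, E31, H00, H11, H01, H10, F03, F21, F12, F30 in G1, G2.
    cunf. cbn [fst snd] in G1, G2.
    match type of G1 with 0 <= ?e => assert (e1 : e = s * s * a * N * D - 2 * s * a * N + fst (O 2 2)%nat)
      by (unfold N, D, xr, xi; ring) end.
    match type of G2 with 0 <= ?e => assert (e2 : e = s * s * b * N * D - 2 * s * b * N + fst (O 3 3)%nat)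
      by (unfold N, D, xr, xi; ring) end.
    rewrite e1 in G1. rewrite e2 in G2. rewrite <- HT.
    replace b with (1 - a) in * by lra. nra. }
  assert (HT0 : 0 <= T) by lra.
  assert (Hab : a * b <= 1/4) by (assert (Hb2 : b = 1 - a) by lra; rewrite Hb2; pose proof (pow2_ge_0 (a - 1/2)); nra).
  split; [rewrite H10; reflexivity|]. split; [unfold D in HD; lra|].
  rewrite <- HN.
  assert (HN0 : 0 <= N) by (unfold N; nra).
  destruct (Req_dec N 0) as [Hn0|Hn0].
  { rewrite Hn0. unfold D in HD. nra. }
  assert (HNp : 0 < N) by lra.
  assert (HDp : 0 < D).
  { destruct (Req_dec D 0) as [Hd0|]; [|lra]. exfalso.
    specialize (Hquad ((T + 1) / N)). rewrite Hd0 in Hquad.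
    replace (2 * ((T + 1) / N) * N) with (2 * (T + 1)) in Hquad by (field; lra). lra. }
  specialize (Hquad (/ D)).
  replace (/ D * / D * N * D - 2 * / D * N) with (- (N / D)) in Hquad by (field; lra).
  assert (N <= D * T).
  { apply Rmult_le_reg_r with (/ D). apply Rinv_0_lt_compat; lra.
    replace (D * T * / D) with T by (field; lra). unfold Rdiv in Hquad. lra. }
  assert (D <= 1/4 - (p^2 + q^2)) by (unfold D; lra).
  nra.
Qed.

Section Conc.
Variables (lam al gi zr zi : R).
Hypothesis Hl : 0 < lam < 1.
Hypothesis Hal : al * al = 1/2.
Hypothesis Hgi : gi * gi = 2 / (1 - lam^2).
Hypothesis Hgi0 : 0 < gi.
Hypothesis Hz : zr * zr + zi * zi = 1.

Definition mm : Mat := mk2 (al, 0) C0 (lam * al, 0) (/ gi, 0).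
Definition rt : Mat := mk2 (1/2, 0) (lam/2 * zr, lam/2 * zi) (lam/2 * zr, - (lam/2 * zi)) (1/2, 0).
Definition mi : Mat := mk2 (2 * al, 0) (- lam * gi, 0) C0 (gi, 0).
Definition gg : Mat := Mmul 2 rt mi.

Lemma gg_eq : MatEq 2 gg (mk2 (al, 0) (gi * (lam/2 * zr - lam/2), gi * (lam/2 * zi))
   (2 * al * (lam/2 * zr), - (2 * al * (lam/2 * zi))) (gi * (1/2 - lam * (lam/2*zr)), gi * (lam * (lam/2 * zi)))).
Proof. apply MatEq2; unfold gg; rewrite Mmul2; simpl; cunf; apply Ceq; cbn [fst snd]; lra. Qed.

Lemma mm_rho : MatEq 2 (Mmul 2 mm (Madj mm)) (rho lam).
Proof.
  intros i j Hi Hj. rewrite rho_eq by auto. revert i j Hi Hj.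
  assert (gi <> 0) by lra.
  assert (Hg2 : / gi * / gi = (1 - lam^2)/2).
  { rewrite <- Rinv_mult, Hgi. field. nra. }
  apply MatEq2; rewrite Mmul2; unfold mm, Madj; simpl; cunf; apply Ceq; cbn [fst snd]; nra.
Qed.

Definition ggx := mk2 (al, 0) (gi * (lam/2 * zr - lam/2), gi * (lam/2 * zi))
   (2 * al * (lam/2 * zr), - (2 * al * (lam/2 * zi))) (gi * (1/2 - lam * (lam/2*zr)), gi * (lam * (lam/2 * zi))).

Lemma mg_rt : MatEq 2 (Mmul 2 mm (Madj gg)) rt.
Proof.
  intros i j Hi Hj. rewrite (Mmul_compat 2 mm mm (Madj gg) (Madj ggx) (fun _ _ _ _ => eq_refl) (Madj_compat _ _ _ gg_eq)) by auto.
  revert i j Hi Hj. assert (gi <> 0) by lra. assert (Hgg : / gi * gi = 1) by (field; auto).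
  apply MatEq2; rewrite Mmul2; unfold mm, ggx, rt, Madj; simpl; cunf; apply Ceq; cbn [fst snd]; try nra.
  all: assert (Hal2 : al^2 = 1/2) by nra; field_simplify; try (rewrite ?Hal2; field); auto.
Qed.

Lemma gm_rt : MatEq 2 (Mmul 2 gg (Madj mm)) rt.
Proof.
  intros i j Hi Hj. rewrite (Mmul_compat 2 gg ggx (Madj mm) (Madj mm) gg_eq (fun _ _ _ _ => eq_refl)) by auto.
  revert i j Hi Hj. assert (gi <> 0) by lra. assert (Hgg : gi * / gi = 1) by (field; auto).
  apply MatEq2; rewrite Mmul2; unfold mm, ggx, rt, Madj; simpl; cunf; apply Ceq; cbn [fst snd]; try nra.
  all: assert (Hal2 : al^2 = 1/2) by nra; field_simplify; try (rewrite ?Hal2; field); auto.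
Qed.

Lemma gg_trace : trace 2 (Mmul 2 gg (Madj gg)) = (1 + lam^2 * (1 - zr) * (2 / (1 - lam^2)), 0).
Proof.
  rewrite (trace_compat 2 _ (Mmul 2 ggx (Madj ggx))) by
    (apply Mmul_compat; [apply gg_eq| apply Madj_compat, gg_eq]).
  unfold trace. cbn [Csum]. rewrite !Mmul2. unfold ggx, Madj. simpl. cunf. apply Ceq; cbn [fst snd]; [|ring].
  transitivity (al * al * (1 + lam*lam*(zr*zr + zi*zi)) + gi * gi * (lam*lam/4*((zr-1)*(zr-1) + zi*zi)
     + (1/2 - lam*lam/2*zr)*(1/2 - lam*lam/2*zr) + lam*lam*lam*lam/4*(zi*zi))). field.
  replace (zi * zi) with (1 - zr * zr) by lra. rewrite Hal, Hgi. field. nra.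
Qed.
End Conc.

Definition Uc (co si : R) : Mat := mk2 (co, - si) C0 C0 (co, si).

Lemma conj_act co si W : co * co + si * si = 1 ->
  MatEq 2 (Mmul 2 (Mmul 2 (Uc co si) W) (Madj (Uc co si)))
    (mk2 (W 0 0)%nat (Cmul (co*co - si*si, -2*co*si) (W 0 1)%nat) (Cmul (co*co - si*si, 2*co*si) (W 1 0)%nat) (W 1 1)%nat).
Proof.
  intros Hcs. apply MatEq2; rewrite !Mmul2; unfold Uc, Madj; simpl.
  - transitivity (Cmul (W 0 0)%nat (co*co+si*si, 0)). cring. rewrite Hcs. cring.
  - cring.
  - cring.
  - transitivity (Cmul (W 1 1)%nat (co*co+si*si, 0)). cring. rewrite Hcs. cring.
Qed.

Lemma uu_eq tau t : MatEq 2 (uu tau t) (Uc (cos (t * (PI/tau))) (sin (t * (PI/tau)))).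
Proof.
  apply MatEq2; unfold uu, Uc, hh, expi; simpl; auto.
  - replace (- t * (PI / tau)) with (- (t * (PI/tau))) by ring. rewrite cos_neg, sin_neg. auto.
  - replace (- t * - (PI / tau)) with (t * (PI/tau)) by ring. auto.
Qed.

Definition rhot tau t lam := Mmul 2 (Mmul 2 (uu tau t) (rho lam)) (Madj (uu tau t)).

Lemma rhot_eq tau t lam :
  let co := cos (t * (PI/tau)) in let si := sin (t * (PI/tau)) in
  MatEq 2 (rhot tau t lam) (rt lam (co*co - si*si) (-2*co*si)).
Proof.
  intros co si i j Hi Hj. unfold rhot.
  rewrite (Mmul_compat 2 _ (Mmul 2 (Uc co si) (mk2 (1/2, 0) (lam/2, 0) (lam/2, 0) (1/2, 0))) _ (Madj (Uc co si)))
    by (first [assumption | apply Madj_compat, uu_eq | apply Mmul_compat; [apply uu_eq | apply rho_eq]]).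
  rewrite conj_act by (first [lia | unfold co, si; pose proof (sin2_cos2 (t * (PI/tau))); unfold Rsqr in *; lra]).
  revert i j Hi Hj. apply MatEq2; unfold rt; simpl; cring.
Qed.

Lemma PSD_compat d A B : MatEq d A B -> PSD d A -> PSD d B.
Proof.
  intros H HA x. assert (qform d x B = qform d x A).
  { unfold qform. apply Csum_ext; intros; apply Csum_ext; intros. rewrite H; auto. }
  rewrite H0. apply HA.
Qed.

Lemma Cpow_real s n : Cpow (s, 0) n = (s ^ n, 0).
Proof. induction n; simpl. reflexivity. rewrite IHn. cring. Qed.

Lemma MatEq_sym d A B : MatEq d A B -> MatEq d B A.
Proof. intros H i j Hi Hj. symmetry; auto. Qed.
Lemma MatEq_trans d A B C : MatEq d A B -> MatEq d B C -> MatEq d A C.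
Proof. intros H1 H2 i j Hi Hj. rewrite H1; auto. Qed.

Lemma trace_add d A B : trace d (Madd A B) = Cadd (trace d A) (trace d B).
Proof. unfold trace, Madd. apply Csum_add. Qed.
Lemma trace_scale d c A : trace d (Mscale c A) = Cmul c (trace d A).
Proof. unfold trace, Mscale. apply Csum_scal. Qed.

Lemma Madj_tpow_eq A n : MatEq (2^n) (Madj (tpow A n)) (tpow (Madj A) n).
Proof. intros i j _ _. apply tpow_adj. Qed.

Lemma tpow_mul_adj A B n : MatEq (2^n) (Mmul (2^n) (tpow A n) (Madj (tpow B n))) (tpow (Mmul 2 A (Madj B)) n).
Proof.
  eapply MatEq_trans. apply Mmul_compat. intros ? ? ? ?; reflexivity. apply Madj_tpow_eq.
  apply tpow_mul.
Qed.

Lemma trace2 A : trace 2 A = Cadd (Cadd C0 (A 0%nat 0%nat)) (A 1%nat 1%nat).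
Proof. reflexivity. Qed.

Definition Zb (d : nat) (P Q : Mat) : Mat := fun I k =>
  if Nat.ltb I d then P I k else Cadd (Q (I - d)%nat k) (Cmul (RtoC (-1)) (P (I - d)%nat k)).

Definition blk (d : nat) (X : Mat) (b1 b2 : nat) : Mat := fun i j => X (b1 * d + i)%nat (b2 * d + j)%nat.

Lemma Zb0 d P Q i k : (i < d)%nat -> Zb d P Q (0 * d + i)%nat k = P i k.
Proof. intros. unfold Zb. replace (0*d+i)%nat with i by lia. apply Nat.ltb_lt in H. rewrite H. auto. Qed.
Lemma Zb1 d P Q i k : Zb d P Q (1 * d + i)%nat k = Cadd (Q i k) (Cmul (RtoC (-1)) (P i k)).
Proof.
  unfold Zb. replace (Nat.ltb (1*d+i) d) with false by (symmetry; apply Nat.ltb_ge; lia).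
  replace (1*d+i-d)%nat with i by lia. auto.
Qed.

Lemma blk00 d P Q : MatEq d (blk d (ZZt d (Zb d P Q)) 0 0) (Mmul d P (Madj P)).
Proof. intros i j Hi Hj. unfold blk, ZZt, Mmul, Madj. apply Csum_ext; intros. rewrite !Zb0; auto. Qed.

Lemma blk01 d P Q : MatEq d (blk d (ZZt d (Zb d P Q)) 0 1)
  (Madd (Mmul d P (Madj Q)) (Mscale (RtoC (-1)) (Mmul d P (Madj P)))).
Proof.
  intros i j Hi Hj. unfold blk, ZZt, Mmul, Madj, Madd, Mscale. rewrite <- Csum_scal, <- Csum_add.
  apply Csum_ext; intros. rewrite Zb0, Zb1 by auto. cring.
Qed.

Lemma blk10 d P Q : MatEq d (blk d (ZZt d (Zb d P Q)) 1 0)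
  (Madd (Mmul d Q (Madj P)) (Mscale (RtoC (-1)) (Mmul d P (Madj P)))).
Proof.
  intros i j Hi Hj. unfold blk, ZZt, Mmul, Madj, Madd, Mscale. rewrite <- Csum_scal, <- Csum_add.
  apply Csum_ext; intros. rewrite Zb0, Zb1 by auto. cring.
Qed.

Lemma blk11 d P Q : MatEq d (blk d (ZZt d (Zb d P Q)) 1 1)
  (Madd (Madd (Madd (Mmul d Q (Madj Q)) (Mscale (RtoC (-1)) (Mmul d Q (Madj P))))
      (Mscale (RtoC (-1)) (Mmul d P (Madj Q)))) (Mmul d P (Madj P))).
Proof.
  intros i j Hi Hj. unfold blk, ZZt, Mmul, Madj, Madd, Mscale. rewrite <- !Csum_scal, <- !Csum_add.
  apply Csum_ext; intros. rewrite !Zb1. cring.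
Qed.

Lemma lin_compat din dout E A B : CPTP din dout E -> MatEq din A B -> MatEq dout (E A) (E B).
Proof. intros [[H _] _]. apply H. Qed.
Lemma lin_comb din dout E A B c : CPTP din dout E -> MatEq dout (E (Madd A (Mscale c B))) (Madd (E A) (Mscale c (E B))).
Proof. intros [[_ H] _]. apply H. Qed.

Lemma addsc_compat d A A' B B' c : MatEq d A A' -> MatEq d B B' ->
  MatEq d (Madd A (Mscale c B)) (Madd A' (Mscale c B')).
Proof. intros H1 H2 i j Hi Hj. unfold Madd, Mscale. rewrite H1, H2; auto. Qed.

Lemma per_t tau lam n E t :
  0 < tau -> 0 < lam < 1 -> CPTP (2^n) 2 E -> TI (2^n) 2 (Htot n (Hq tau)) (Hq tau) E ->
  let S := E (tpow (rho lam) n) in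
  let co := cos (t * (PI/tau)) in let si := sin (t * (PI/tau)) in
  let zr := co*co - si*si in
  Cre (S 0 1)%nat = Cre (S 1 0)%nat /\ Cre (S 0 0)%nat + Cre (S 1 1)%nat = 1 /\
  Cre (S 0 1)%nat ^ 2 + Cim (S 0 1)%nat ^ 2 <= 1/4 /\
  (Cre (S 0 1)%nat ^ 2 + Cim (S 0 1)%nat ^ 2) * (2 - 2*zr) <=
    (1/4 - (Cre (S 0 1)%nat ^ 2 + Cim (S 0 1)%nat ^ 2)) * ((1 + lam^2 * (1 - zr) * (2/(1-lam^2)))^n - 1).
Proof.
  intros Htau Hl HE HTI S co si zr.
  set (zi := -2*co*si).
  assert (Hcs : co*co + si*si = 1) by (unfold co, si; pose proof (sin2_cos2 (t * (PI/tau))); unfold Rsqr in *; lra).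
  assert (Hz : zr*zr + zi*zi = 1).
  { unfold zr, zi. replace ((co * co - si * si) * (co * co - si * si) + -2 * co * si * (-2 * co * si))
      with ((co*co+si*si)*(co*co+si*si)) by ring. rewrite Hcs. ring. }
  set (al := / sqrt 2). assert (Hal : al * al = 1/2) by apply sqrt2_inv.
  assert (H1l : 0 < 1 - lam^2) by nra.
  assert (H2l : 0 < 2 / (1 - lam^2)) by (apply Rdiv_lt_0_compat; lra).
  set (gi := sqrt (2 / (1 - lam^2))).
  assert (Hgi : gi * gi = 2 / (1 - lam^2)) by (apply sqrt_sqrt; lra).
  assert (Hgi0 : 0 < gi) by (apply sqrt_lt_R0; lra).
  set (m := mm lam al gi). set (g := gg lam al gi zr zi).
  set (P := tpow m n). set (Q := tpow g n).
  set (X := ZZt (2^n) (Zb (2^n) P Q)).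
  assert (HX : PSD (2 * 2^n) X) by apply ZZt_PSD.
  destruct HE as [Hlin [Hcp Htp]].
  assert (HE : CPTP (2^n) 2 E) by (split; [|split]; auto).
  pose proof (Hcp 2%nat X HX) as HO.
  set (O := ampliate (2^n) 2 E X) in HO.
  assert (Fmm : MatEq 2 (Mmul 2 m (Madj m)) (rho lam)) by (apply mm_rho; auto).
  assert (Fmg : MatEq 2 (Mmul 2 m (Madj g)) (rhot tau t lam)).
  { eapply MatEq_trans. apply mg_rt; auto. apply MatEq_sym, rhot_eq. }
  assert (Fgm : MatEq 2 (Mmul 2 g (Madj m)) (rhot tau t lam)).
  { eapply MatEq_trans. apply gm_rt; auto. apply MatEq_sym, rhot_eq. }
  assert (M00 : MatEq (2^n) (blk (2^n) X 0 0) (tpow (rho lam) n)).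
  { eapply MatEq_trans. apply blk00. eapply MatEq_trans. apply tpow_mul_adj. apply tpow_compat, Fmm. }
  assert (M01 : MatEq (2^n) (blk (2^n) X 0 1) (Madd (tpow (rhot tau t lam) n) (Mscale (RtoC (-1)) (tpow (rho lam) n)))).
  { eapply MatEq_trans. apply blk01. apply addsc_compat.
    eapply MatEq_trans. apply tpow_mul_adj. apply tpow_compat, Fmg.
    eapply MatEq_trans. apply tpow_mul_adj. apply tpow_compat, Fmm. }
  assert (M10 : MatEq (2^n) (blk (2^n) X 1 0) (Madd (tpow (rhot tau t lam) n) (Mscale (RtoC (-1)) (tpow (rho lam) n)))).
  { eapply MatEq_trans. apply blk10. apply addsc_compat.
    eapply MatEq_trans. apply tpow_mul_adj. apply tpow_compat, Fgm.
    eapply MatEq_trans. apply tpow_mul_adj. apply tpow_compat, Fmm. }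
  set (s := 1 + lam^2 * (1 - zr) * (2/(1-lam^2))).
  assert (Trho : trace 2 (rho lam) = (1, 0)).
  { rewrite (trace_compat 2 _ _ (rho_eq lam)). rewrite trace2. simpl. cunf. apply Ceq; simpl; lra. }
  assert (Trt : trace 2 (rhot tau t lam) = (1, 0)).
  { rewrite (trace_compat 2 _ _ (rhot_eq tau t lam)). rewrite trace2. unfold rt. simpl. cunf. apply Ceq; simpl; lra. }
  assert (Tgg : trace 2 (Mmul 2 g (Madj g)) = (s, 0)) by (apply gg_trace; auto).
  assert (TP : forall A B, MatEq 2 (Mmul 2 A (Madj B)) (rhot tau t lam) ->
     trace (2^n) (Mmul (2^n) (tpow A n) (Madj (tpow B n))) = (1, 0)).
  { intros A B HAB. rewrite (trace_compat _ _ _ (tpow_mul_adj A B n)).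
    rewrite (trace_compat _ _ _ (tpow_compat _ _ n HAB)). rewrite trace_tpow, Trt, Cpow_real, pow1. auto. }
  assert (T11 : trace (2^n) (blk (2^n) X 1 1) = (s^n - 1, 0)).
  { rewrite (trace_compat (2^n) (blk (2^n) X 1 1) _ (blk11 _ P Q)). rewrite !trace_add, !trace_scale.
    unfold P, Q. rewrite (TP g m Fgm), (TP m g Fmg).
    rewrite (trace_compat _ _ _ (tpow_mul_adj g g n)), trace_tpow, Tgg, Cpow_real.
    rewrite (trace_compat _ _ _ (tpow_mul_adj m m n)), (trace_compat _ _ _ (tpow_compat _ _ n Fmm)),
      trace_tpow, Trho, Cpow_real, pow1.
    cunf. apply Ceq; simpl; ring. }
  assert (dens : density (2^n) (tpow (rho lam) n)).
  { split.
    - eapply PSD_compat. eapply MatEq_trans. apply tpow_mul_adj. apply tpow_compat, Fmm.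
      apply (ZZt_PSD (2^n) (2^n) P).
    - rewrite trace_tpow, Trho, Cpow_real, pow1. reflexivity. }
  pose proof (HTI (tpow (rho lam) n) t (tpow (uu tau t) n) (uu tau t) dens (U_in tau t n) (U_out tau t)) as Hti.
  assert (UsU : MatEq (2^n) (Mmul (2^n) (Mmul (2^n) (tpow (uu tau t) n) (tpow (rho lam) n)) (Madj (tpow (uu tau t) n)))
      (tpow (rhot tau t lam) n)).
  { eapply MatEq_trans. apply Mmul_compat. apply tpow_mul. apply Madj_tpow_eq. apply tpow_mul. }
  set (W := mk2 (S 0 0)%nat (Cmul (co*co - si*si, -2*co*si) (S 0 1)%nat) (Cmul (co*co - si*si, 2*co*si) (S 1 0)%nat) (S 1 1)%nat).
  assert (Erhot : MatEq 2 (E (tpow (rhot tau t lam) n)) W).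
  { eapply MatEq_trans. eapply (lin_compat _ _ E _ _ HE). apply MatEq_sym, UsU.
    eapply MatEq_trans. apply MatEq_sym, Hti.
    eapply MatEq_trans. apply Mmul_compat. apply Mmul_compat. apply uu_eq. intros ? ? ? ?; reflexivity.
    apply Madj_compat, uu_eq.
    apply conj_act; auto. }
  assert (E01 : MatEq 2 (E (blk (2^n) X 0 1)) (Madd W (Mscale (RtoC (-1)) S))).
  { eapply MatEq_trans. eapply (lin_compat _ _ E _ _ HE). apply M01.
    eapply MatEq_trans. apply (lin_comb _ _ E _ _ _ HE). apply addsc_compat; auto. intros ? ? ? ?; reflexivity. }
  assert (E10 : MatEq 2 (E (blk (2^n) X 1 0)) (Madd W (Mscale (RtoC (-1)) S))).
  { eapply MatEq_trans. eapply (lin_compat _ _ E _ _ HE). apply M10.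
    eapply MatEq_trans. apply (lin_comb _ _ E _ _ _ HE). apply addsc_compat; auto. intros ? ? ? ?; reflexivity. }
  assert (E00 : MatEq 2 (E (blk (2^n) X 0 0)) S) by (eapply (lin_compat _ _ E _ _ HE); apply M00).
  assert (TS : trace 2 S = Defs.C1) by (unfold S; rewrite Htp; apply dens).
  assert (TY : trace 2 (E (blk (2^n) X 1 1)) = (s^n - 1, 0)) by (rewrite Htp; apply T11).
  assert (O00 : O 0%nat 0%nat = S 0%nat 0%nat) by (change (E (blk (2^n) X 0 0) 0%nat 0%nat = S 0%nat 0%nat); apply E00; lia).
  assert (O01 : O 0%nat 1%nat = S 0%nat 1%nat) by (change (E (blk (2^n) X 0 0) 0%nat 1%nat = S 0%nat 1%nat); apply E00; lia).
  assert (O10 : O 1%nat 0%nat = S 1%nat 0%nat) by (change (E (blk (2^n) X 0 0) 1%nat 0%nat = S 1%nat 0%nat); apply E00; lia).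
  assert (O11 : O 1%nat 1%nat = S 1%nat 1%nat) by (change (E (blk (2^n) X 0 0) 1%nat 1%nat = S 1%nat 1%nat); apply E00; lia).
  assert (O02 : O 0%nat 2%nat = C0).
  { change (E (blk (2^n) X 0 1) 0%nat 0%nat = C0). rewrite E01 by lia. unfold Madd, Mscale, W, mk2. cring. }
  assert (O13 : O 1%nat 3%nat = C0).
  { change (E (blk (2^n) X 0 1) 1%nat 1%nat = C0). rewrite E01 by lia. unfold Madd, Mscale, W, mk2. cring. }
  assert (O20 : O 2%nat 0%nat = C0).
  { change (E (blk (2^n) X 1 0) 0%nat 0%nat = C0). rewrite E10 by lia. unfold Madd, Mscale, W, mk2. cring. }
  assert (O31 : O 3%nat 1%nat = C0).
  { change (E (blk (2^n) X 1 0) 1%nat 1%nat = C0). rewrite E10 by lia. unfold Madd, Mscale, W, mk2. cring. }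
  assert (O03 : O 0%nat 3%nat = Cmul (zr - 1, zi) (O 0 1)%nat).
  { rewrite O01. change (E (blk (2^n) X 0 1) 0%nat 1%nat = Cmul (zr - 1, zi) (S 0 1)%nat). rewrite E01 by lia.
    unfold Madd, Mscale, W, mk2, zr, zi. cring. }
  assert (O21 : O 2%nat 1%nat = Cmul (zr - 1, zi) (O 0 1)%nat).
  { rewrite O01. change (E (blk (2^n) X 1 0) 0%nat 1%nat = Cmul (zr - 1, zi) (S 0 1)%nat). rewrite E10 by lia.
    unfold Madd, Mscale, W, mk2, zr, zi. cring. }
  assert (O12 : O 1%nat 2%nat = Cmul (zr - 1, - zi) (O 1 0)%nat).
  { rewrite O10. change (E (blk (2^n) X 0 1) 1%nat 0%nat = Cmul (zr - 1, - zi) (S 1 0)%nat). rewrite E01 by lia.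
    unfold Madd, Mscale, W, mk2, zr, zi. cring. }
  assert (O30 : O 3%nat 0%nat = Cmul (zr - 1, - zi) (O 1 0)%nat).
  { rewrite O10. change (E (blk (2^n) X 1 0) 1%nat 0%nat = Cmul (zr - 1, - zi) (S 1 0)%nat). rewrite E10 by lia.
    unfold Madd, Mscale, W, mk2, zr, zi. cring. }
  assert (Htr1 : Cre (O 0 0)%nat + Cre (O 1 1)%nat = 1).
  { rewrite O00, O11. rewrite trace2 in TS. unfold Cre. cunf. apply (f_equal fst) in TS. simpl in TS. lra. }
  assert (HT : Cre (O 2 2)%nat + Cre (O 3 3)%nat = s^n - 1).
  { change (Cre (E (blk (2^n) X 1 1) 0%nat 0%nat) + Cre (E (blk (2^n) X 1 1) 1%nat 1%nat) = s^n - 1).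
    rewrite trace2 in TY. apply (f_equal fst) in TY. unfold Cre. cunf. simpl in TY. lra. }
  destruct (out_lemma O zr zi (s^n - 1) HO Htr1 Hz O02 O20 O13 O31 O03 O21 O12 O30 HT) as [R1 [R2 R3]].
  rewrite O01, O10 in *. rewrite O00, O11 in Htr1.
  repeat split; auto.
Qed.

Theorem mainTheorem19 :
  forall (tau lam : R), 0 < tau -> 0 < lam < 1 ->
  exists (K : R) (N : nat),
    forall (n : nat) (E : Mat -> Mat),
      (N <= n)%nat ->
      CPTP (2 ^ n) 2 E ->
      TI (2 ^ n) 2 (Htot n (Hq tau)) (Hq tau) E ->
      1 - Cre (qform 2 Phi (E (tpow (rho lam) n)))
        >= / INR n * ((1 - lam ^ 2) / (4 * lam ^ 2)) - K / (INR n ^ 2).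
Proof.
  intros tau lam Htau Hl. exists (((1 - lam^2)/lam^2)^2/4), 1%nat.
  intros n E Hn HE HTI.
  pose proof (per_t tau lam n E 0 Htau Hl HE HTI) as H0. cbv zeta in H0.
  set (S := E (tpow (rho lam) n)) in *.
  destruct H0 as [R1 [R2 [R3 _]]].
  set (x := Cre (S 0 1)%nat ^ 2 + Cim (S 0 1)%nat ^ 2) in *.
  set (kap := 4 * lam^2 / (1 - lam^2)).
  assert (H1l : 0 < 1 - lam^2) by nra.
  assert (Hk : 0 < kap) by (unfold kap; apply Rdiv_lt_0_compat; nra).
  assert (Hx0 : 0 <= x) by (unfold x; nra).
  assert (Hlim : 4 * x <= (1/4 - x) * (INR n * kap)).
  { apply (lim_arg x kap n); auto. intros eps He.
    set (th := Rmin 1 eps / 2).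
    assert (Hth0 : 0 < th) by (unfold th; unfold Rmin; destruct (Rle_dec 1 eps); lra).
    assert (Hth1 : th <= 1/2) by (unfold th; pose proof (Rmin_l 1 eps); lra).
    assert (Hth2 : th <= eps/2) by (unfold th; pose proof (Rmin_r 1 eps); lra).
    assert (HPI : 0 < PI) by apply PI_RGT_0.
    pose proof (per_t tau lam n E (th * tau / PI) Htau Hl HE HTI) as Ht. cbv zeta in Ht.
    replace (th * tau / PI * (PI / tau)) with th in Ht by (field; lra).
    fold S in Ht. fold x in Ht. destruct Ht as [_ [_ [_ Ht]]].
    set (si := sin th) in *. set (co := cos th) in *.
    assert (Hcs : co * co + si * si = 1) by (unfold co, si; pose proof (sin2_cos2 th); unfold Rsqr in *; lra).
    assert (Hsi0 : 0 < si) by (apply sin_gt_0; pose proof PI2_1; lra).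
    assert (Hsi1 : si < th) by (apply sin_lt_x; lra).
    exists (si * si). split. split. nra. nra.
    replace (1 + lam ^ 2 * (1 - (co * co - si * si)) * (2 / (1 - lam ^ 2))) with (1 + kap * (si * si)) in Ht.
    replace (2 - 2 * (co * co - si * si)) with (4 * (si * si)) in Ht by nra. nra.
    unfold kap. replace (1 - (co * co - si * si)) with (2 * (si * si)) by nra. field. lra. }
  assert (Hq : Cre (qform 2 Phi S) = 1/2 + Cre (S 0 1)%nat).
  { unfold qform. cbn [Csum]. unfold Phi. simpl. pose proof sqrt2_inv as Hs.
    unfold Cre in *. cunf. cbn [fst snd].
    set (p := / sqrt 2) in *.
    transitivity (p * p * (fst (S 0 0)%nat + fst (S 1 1)%nat + fst (S 0 1)%nat + fst (S 1 0)%nat)). ring.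
    rewrite Hs. rewrite R2, <- R1. lra. }
  rewrite Hq.
  pose proof (final_arith lam x (Cre (S 0 1)%nat) n Hl Hn Hx0) as F.
  assert (1/2 - Cre (S 0 1)%nat >= / INR n * ((1 - lam ^ 2) / (4 * lam ^ 2)) - ((1 - lam ^ 2) / lam ^ 2) ^ 2 / 4 / INR n ^ 2).
  { apply F. unfold x; nra. exact Hlim. }
  lra.
Qed.
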